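(* Let $n$ be a positive integer and $G=(V,E)$ the complete graph on $n$ vertices. Let $\tau$ be a set of types, $f:\tau\to\mathbb{Q}_{\ge1}$ a fitness function, and $\alpha\in\tau$. Let $\beta^+=\arg\max\{f(\beta):\beta\in\tau\setminus\{\alpha\}\}$ and $\beta^-=\arg\min\{f(\beta):\beta\in\tau\setminus\{\alpha\}\}$, and suppose $f(\alpha)\ne f(\beta^+)$ and $f(\alpha)\ne f(\beta^-)$. Let $M_0:V\to\tau$ be a state and let $i$ be the number of vertices mapped to $\alpha$ by $M_0$. Then $$\frac{1-\left(f(\beta^+)/f(\alpha)\right)^i}{1-\left(f(\beta^+)/f(\alpha)\right)^n}\le\pi_\alpha(G,\tau,f,M_0)\le\frac{1-\left(f(\beta^-)/f(\alpha)\right)^i}{1-\left(f(\beta^-)/f(\alpha)\right)^n}.$$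
   Context: For $G=(V,E)$, $N(v)$ is the neighbourhood of $v$. For a state $S:V\to\tau$ and $v,w\in V$, $S|_{v\to w}$ equals $S$ except $w$ gets type $S(v)$. The Moran process $M(G,\tau,f,M_0)$ is the Markov chain on states started at $M_0$ in which, given $M_t$, a vertex $v$ is chosen with probability $f(M_t(v))/\sum_{u\in V}f(M_t(u))$, then $w\in N(v)$ uniformly at random, and $M_{t+1}=M_t|_{v\to w}$. $\pi_j(G,\tau,f,M_0)$ is the probability that at some time every vertex has type $j$. *)

(* Defs.v *)
From HB Require Import structures.
From mathcomp Require Import all_boot all_order all_algebra.
From mathcomp Require Import boolp classical_sets reals.
Set Implicit Arguments. Unset Strict Implicit. Unset Printing Implicit Defensive.
Import Order.TTheory GRing.Theory Num.Theory.
Local Open Scope ring_scope.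

Section Moran.
Variables (R : realType) (V T : finType).

Definition nbhd (G : rel V) (v : V) : {set V} := [set w | G v w].

Definition upd (S : {ffun V -> T}) (v w : V) : {ffun V -> T} :=
  [ffun u => if u == w then S v else S u].

(* one-step transition probability of the Moran process M(G,T,f,_):
   v chosen with prob. f(S v)/sum_u f(S u), then w uniform in N(v). *)
Definition moran_step (G : rel V) (f : T -> R) (S S' : {ffun V -> T}) : R :=
  \sum_(v : V) \sum_(w in nbhd G v)
     (f (S v) / \sum_(u : V) f (S u)) * (#|nbhd G v|%:R)^-1
       * (upd S v w == S')%:R.

Definition monochrome (j : T) (S : {ffun V -> T}) : bool := S == [ffun=> j].

(* probability that the chain started at S is monochromatic of type j
   at some time <= t *)
Fixpoint hit_within (G : rel V) (f : T -> R) (j : T) (t : nat)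
    (S : {ffun V -> T}) : R :=
  if monochrome j S then 1 else
  match t with
  | 0 => 0
  | t'.+1 => \sum_(S' : {ffun V -> T}) moran_step G f S S' * hit_within G f j t' S'
  end.

(* pi_j(G,T,f,M0): probability that at some time every vertex has type j
   = P(U_t {hit by time t}) = sup_t P(hit by time t) (continuity from below) *)
Definition fixation_prob (G : rel V) (f : T -> R) (j : T) (M0 : {ffun V -> T}) : R :=
  sup (range (fun t : nat => hit_within G f j t M0)).

End Moran.

Definition complete_graph (n : nat) : rel 'I_n := fun v w => v != w.
Arguments complete_graph n : clear implicits.

(* Main.v *)
Require Import Defs.
From HB Require Import structures.
From mathcomp Require Import all_boot all_order all_algebra.
From mathcomp Require Import boolp classical_sets reals.
From mathcomp Require Import ring lra zify.
Import Order.TTheory GRing.Theory Num.Theory.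
Local Open Scope ring_scope.

Section Moran.
Variables (R : realType) (n : nat) (T : finType) (a : T) (F : T -> R).
Hypothesis Fpos : forall x, 0 < F x.
Hypothesis n0 : (0 < n)%N.

Local Notation G := (complete_graph n).
Local Notation St := {ffun 'I_n -> T}.

Definition cnt (S : St) := #|[set v | S v == a]|.
Definition W (S : St) := \sum_u F (S u).
Definition dn : R := (n.-1)%:R^-1.
Definition e : R := (n.-1)%:R * dn.
Definition E (S : St) (g : St -> R) :=
  \sum_v \sum_(w in nbhd G v) (F (S v) / W S) * dn * g (upd S v w).

Lemma card_nbhd v : #|nbhd G v| = n.-1.
Proof.
have -> : nbhd G v = [set~ v] by apply/setP => w; rewrite !inE eq_sym.
by rewrite cardsC1 card_ord.
Qed.

Lemma in_nbhd v w : (w \in nbhd G v) = (v != w).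
Proof. by rewrite inE. Qed.

Lemma W_gt0 S : 0 < W S.
Proof.
rewrite /W; case: n n0 S => // m _ S.
rewrite big_ord_recl ltr_wpDr //; first by apply: sumr_ge0 => i _; exact/ltW.
Qed.

Lemma stepE S g : \sum_S' moran_step G F S S' * g S' = E S g.
Proof.
rewrite /moran_step /E.
under eq_bigr do rewrite big_distrl /=.
rewrite exchange_big; apply: eq_bigr => v _.
under eq_bigr do rewrite big_distrl /=.
rewrite exchange_big; apply: eq_bigr => w _.
rewrite card_nbhd -/dn -/(W S).
rewrite (bigD1 (upd S v w)) //= eqxx mulr1 big1 ?addr0 //.
by move=> S' neq; rewrite eq_sym (negPf neq) mulr0 mul0r.
Qed.

Lemma E_const S c : E S (fun _ => c) = e * c.
Proof.
rewrite /E /e.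
under eq_bigr do rewrite sumr_const card_nbhd.
rewrite -mulr_natr.
under eq_bigr => v _ do rewrite -mulr_natr.
transitivity (\sum_v F (S v) / W S * ((n.-1)%:R * dn * c)).
  by apply: eq_bigr => v _; ring.
rewrite -big_distrl /= -big_distrl /= -/(W S) divff ?mul1r //.
by rewrite gt_eqF // W_gt0.
Qed.

Lemma E_add S g1 g2 : E S (fun x => g1 x + g2 x) = E S g1 + E S g2.
Proof.
rewrite /E -big_split; apply: eq_bigr => v _; rewrite -big_split.
by apply: eq_bigr => w _; rewrite mulrDr.
Qed.

Lemma E_sub S g1 g2 : E S (fun x => g1 x - g2 x) = E S g1 - E S g2.
Proof.
rewrite /E -sumrB; apply: eq_bigr => v _; rewrite -sumrB.
by apply: eq_bigr => w _; rewrite mulrBr.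
Qed.

Lemma coef_ge0 (S : St) (v : 'I_n) : 0 <= F (S v) / W S * dn.
Proof.
apply: mulr_ge0; [apply: divr_ge0; apply: ltW; [exact: Fpos|exact: W_gt0]|by rewrite invr_ge0 ler0n].
Qed.

Lemma E_le S g1 g2 : (forall x, g1 x <= g2 x) -> E S g1 <= E S g2.
Proof.
move=> H; apply: ler_sum => v _; apply: ler_sum => w _.
by apply: ler_wpM2l; [exact: coef_ge0|].
Qed.

Lemma E_ge0 S g : (forall x, 0 <= g x) -> 0 <= E S g.
Proof.
move=> H; rewrite -(mulr0 e) -(E_const S); exact: E_le.
Qed.

Lemma e_ge0 : 0 <= e.
Proof. by rewrite /e /dn mulr_ge0 ?invr_ge0 ?ler0n. Qed.

Lemma e_le1 : e <= 1.
Proof.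
rewrite /e /dn; have [->|nz] := eqVneq ((n.-1)%:R : R) 0; first by rewrite mul0r.
by rewrite divff.
Qed.

Lemma e_1 : (1 < n)%N -> e = 1.
Proof.
move=> n1; rewrite /e /dn divff // pnatr_eq0 -lt0n; by case: n n1 => [|[]].
Qed.


Lemma cnt_upd (S : St) v w : (cnt (upd S v w) + (S w == a) = cnt S + (S v == a))%N.
Proof.
rewrite /cnt (cardsD1 w [set u | upd S v w u == a]) (cardsD1 w [set u | S u == a]).
have -> : [set u | upd S v w u == a] :\ w = [set u | S u == a] :\ w.
  by apply/setP => u; rewrite !inE /upd ffunE; case: eqP.
rewrite !inE /upd ffunE eqxx.
case: (S v == a); case: (S w == a) => /=; lia.
Qed.

Definition Y (S : St) (g : nat -> R) v w := F (S v) * (g (cnt (upd S v w)) - g (cnt S)).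

Lemma E_cnt S g : E S (fun X => g (cnt X)) =
  e * g (cnt S) + dn / W S * \sum_v \sum_(w in nbhd G v) Y S g v w.
Proof.
rewrite -[LHS](subrK (E S (fun _ => g (cnt S)))) -E_sub E_const addrC; congr (_ + _).
rewrite /E big_distrr; apply: eq_bigr => v _; rewrite big_distrr.
apply: eq_bigr => w _; rewrite /Y.
have H : forall x y z u : R, x / y * z * u = z / y * (x * u) by move=> *; ring.
exact: H.
Qed.

Lemma swap (X : 'I_n -> 'I_n -> R) :
  \sum_v \sum_(w in nbhd G v) X v w = \sum_v \sum_(w in nbhd G v) X w v.
Proof.
under eq_bigr do rewrite big_mkcond.
rewrite exchange_big; apply: eq_bigr => w _; rewrite [RHS]big_mkcond.
by apply: eq_bigr => v _; rewrite !in_nbhd eq_sym.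
Qed.

Definition t1 (S : St) v w := (S v == a) && (S w != a).

Lemma Dsplit S g : \sum_v \sum_(w in nbhd G v) Y S g v w =
  \sum_v \sum_(w in nbhd G v) (t1 S v w)%:R * (Y S g v w + Y S g w v).
Proof.
transitivity (\sum_v \sum_(w in nbhd G v)
   ((t1 S v w)%:R * Y S g v w + (t1 S w v)%:R * Y S g v w)).
  { apply: eq_bigr => v _; apply: eq_bigr => w; rewrite in_nbhd => vw.
  rewrite /t1 /Y; have := cnt_upd S v w.
  case: (S v == a); case: (S w == a) => /= h.
  all: try by rewrite ?mul1r ?mul0r ?addr0 ?add0r.
  all: have e1 : cnt (upd S v w) = cnt S by lia.
  all: by rewrite e1 subrr !mulr0 ?mul0r addr0. }
under eq_bigr do rewrite big_split /=.
rewrite big_split /= (swap (fun v w => (t1 S w v)%:R * Y S g v w)) /= -big_split /=.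
by apply: eq_bigr => v _; rewrite -big_split /=; apply: eq_bigr => w _; rewrite mulrDr.
Qed.

Definition sr (r : R) := \sum_(i < n) r ^+ i.
Definition phi (r : R) (k : nat) := (\sum_(i < k) r ^+ i) / sr r.

Lemma sr_gt0 r : 0 <= r -> 0 < sr r.
Proof.
move=> r0; rewrite /sr; case: n n0 => // m _.
rewrite big_ord_recl expr0 ltr_wpDr //; apply: sumr_ge0 => i _; exact: exprn_ge0.
Qed.

Lemma phiS r k : phi r k.+1 = phi r k + r ^+ k / sr r.
Proof. by rewrite /phi big_ord_recr /= mulrDl. Qed.

Lemma phi0 r : phi r 0 = 0.
Proof. by rewrite /phi big_ord0 mul0r. Qed.

Lemma phin r : 0 <= r -> phi r n = 1.
Proof. by move=> r0; rewrite /phi -/(sr r) divff // gt_eqF // sr_gt0. Qed.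

Lemma phi_ge0 r k : 0 <= r -> 0 <= phi r k.
Proof.
move=> r0; apply: divr_ge0; last exact/ltW/sr_gt0.
by apply: sumr_ge0 => i _; exact: exprn_ge0.
Qed.

Lemma pair_term S r v w : t1 S v w ->
  Y S (phi r) v w + Y S (phi r) w v =
  r ^+ (cnt (upd S w v)) / sr r * (F a * r - F (S w)).
Proof.
rewrite /t1 => /andP [/eqP Sv /negPf Sw].
have h1 := cnt_upd S v w; have h2 := cnt_upd S w v.
rewrite Sw Sv eqxx /= in h1 h2.
set j := cnt (upd S w v) in h2 *.
have ek : cnt S = j.+1 by lia.
have ek2 : cnt (upd S v w) = j.+2 by lia.
rewrite /Y ek ek2 /j Sv !phiS exprS; ring.
Qed.

Lemma drift_ge S r : 0 <= r -> (forall b, b != a -> F b <= F a * r) ->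
  0 <= \sum_v \sum_(w in nbhd G v) Y S (phi r) v w.
Proof.
move=> r0 Hb; rewrite Dsplit; apply: sumr_ge0 => v _; apply: sumr_ge0 => w _.
case t: (t1 S v w); last by rewrite mul0r.
rewrite mul1r pair_term //; apply: mulr_ge0.
  by apply: divr_ge0; [exact: exprn_ge0| exact/ltW/sr_gt0].
by rewrite subr_ge0; apply: Hb; move: t => /andP [].
Qed.

Lemma drift_le S r : 0 <= r -> (forall b, b != a -> F a * r <= F b) ->
  \sum_v \sum_(w in nbhd G v) Y S (phi r) v w <= 0.
Proof.
move=> r0 Hb; rewrite Dsplit; apply: sumr_le0 => v _; apply: sumr_le0 => w _.
case t: (t1 S v w); last by rewrite mul0r.
rewrite mul1r pair_term //; apply: mulr_ge0_le0.
  by apply: divr_ge0; [exact: exprn_ge0| exact/ltW/sr_gt0].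
by rewrite subr_le0; apply: Hb; move: t => /andP [].
Qed.


Definition h t S := hit_within G F a t S.
Definition H S := fixation_prob G F a S.

Lemma hS t S : h t.+1 S = if monochrome a S then 1 else E S (h t).
Proof. by rewrite /h /=; case: ifP => // _; rewrite stepE. Qed.

Lemma h0 S : h 0 S = if monochrome a S then 1 else 0.
Proof. by []. Qed.

Lemma mono_cnt S : monochrome a S -> cnt S = n.
Proof.
rewrite /monochrome => /eqP ->; rewrite /cnt.
have -> : [set v | [ffun=> a] v == a] = [set: 'I_n]%SET.
  by apply/setP => v; rewrite !inE ffunE eqxx.
by rewrite cardsT card_ord.
Qed.

Lemma cnt_mono S : cnt S = n -> monochrome a S.
Proof.
move=> Hc; have HT : [set v | S v == a] = [set: 'I_n]%SET.
  by apply/eqP; rewrite eqEcard finset.subsetT cardsT card_ord /=; rewrite /cnt in Hc; rewrite Hc.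
apply/eqP/ffunP => v; rewrite ffunE.
have : v \in [set v | S v == a] by rewrite HT inE.
by rewrite inE => /eqP.
Qed.

Lemma h_ge0 t S : 0 <= h t S.
Proof.
elim: t S => [|t IH] S; first by rewrite h0; case: ifP.
rewrite hS; case: ifP => // _; exact: E_ge0.
Qed.

Lemma h_le1 t S : h t S <= 1.
Proof.
elim: t S => [|t IH] S; first by rewrite h0; case: ifP.
rewrite hS; case: ifP => // _.
apply: (le_trans (E_le S (h t) (fun _ => 1) IH)).
by rewrite E_const mulr1 e_le1.
Qed.

Lemma h_mono t S : h t S <= h t.+1 S.
Proof.
elim: t S => [|t IH] S.
  by rewrite h0 hS; case: ifP => // _; apply: E_ge0 => x; exact: h_ge0.
rewrite hS [h t.+2 S]hS; case: ifP => // _; exact: E_le.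
Qed.

Lemma h_monoN t t' S : (t <= t')%N -> h t S <= h t' S.
Proof.
move=> /subnK <-; elim: (t' - t)%N => [|d IH] //.
by apply: le_trans IH _; rewrite addSn; exact: h_mono.
Qed.

Lemma hs S : has_sup (range (fun t => h t S)).
Proof.
split; first by exists (h 0 S), 0%N.
by exists 1 => y [t _ <-]; exact: h_le1.
Qed.

Lemma H_ub t S : h t S <= H S.
Proof. by apply: (sup_upper_bound (hs S)); exists t. Qed.

Lemma H_ge0 S : 0 <= H S.
Proof. exact: le_trans (h_ge0 0 S) (H_ub 0 S). Qed.

Lemma H_adh eps : 0 < eps -> exists t, forall S, H S - eps <= h t S.
Proof.
move=> he.
suff : forall s : seq St, exists t, forall S, S \in s -> H S - eps <= h t S.
  by case/(_ (enum St)) => t Ht; exists t => S; apply: Ht; rewrite mem_enum.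
elim=> [|x s [t Ht]]; first by exists 0%N.
have [y [t' _ <-] lt] := sup_adherent he (hs x).
exists (maxn t t') => S; rewrite inE => /orP [/eqP ->|Sin].
  apply: le_trans (ltW lt) _; apply: h_monoN; exact: leq_maxr.
apply: le_trans (Ht S Sin) _; apply: h_monoN; exact: leq_maxl.
Qed.

Lemma PH_le S : ~~ monochrome a S -> E S H <= H S.
Proof.
move=> nm; apply/ler_addgt0Pr => eps he.
have [t Ht] := H_adh eps he.
apply: le_trans (_ : E S (fun X => h t X + eps) <= _).
  apply: E_le => X; rewrite -lerBlDr; exact: Ht.
rewrite E_add E_const lerD //.
  by apply: le_trans (H_ub t.+1 S); rewrite hS (negPf nm).
apply: ler_piMl; [exact: ltW | exact: e_le1].
Qed.


Lemma upper r : 0 <= r -> (forall b, b != a -> F a * r <= F b) ->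
  forall S, H S <= phi r (cnt S).
Proof.
move=> r0 Hb.
have key : forall t S, h t S <= phi r (cnt S).
  elim => [|t IH] S.
    rewrite h0; case: ifP => [/mono_cnt -> | _]; [by rewrite phin | exact: phi_ge0].
  rewrite hS; case: ifP => [/mono_cnt -> | _]; first by rewrite phin.
  apply: le_trans (E_le S (h t) (fun X => phi r (cnt X)) IH) _.
  rewrite E_cnt; apply: le_trans (_ : e * phi r (cnt S) + 0 <= _).
    rewrite lerD2l; apply: mulr_ge0_le0; last exact: drift_le.
    by apply: divr_ge0; [rewrite invr_ge0 ler0n | exact/ltW/W_gt0].
  by rewrite addr0; apply: ler_piMl; [exact: phi_ge0 | exact: e_le1].
move=> S; apply: ge_sup; first by exists (h 0 S), 0%N.
by move=> y [t _ <-]; exact: key.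
Qed.

Lemma term_le_sum (X : 'I_n -> 'I_n -> R) v w :
  (forall v w, 0 <= X v w) -> v != w ->
  X v w <= \sum_v \sum_(w in nbhd G v) X v w.
Proof.
move=> X0 vw; rewrite (bigD1 v) //= (bigD1 w) /= ?in_nbhd //.
rewrite -addrA lerDl; apply: addr_ge0.
  by apply: sumr_ge0 => *; exact: X0.
by apply: sumr_ge0 => *; apply: sumr_ge0 => *; exact: X0.
Qed.

Lemma lower r : 0 <= r -> (forall b, b != a -> F b <= F a * r) ->
  forall S0, phi r (cnt S0) <= H S0.
Proof.
move=> r0 Hb S0.
pose D S := phi r (cnt S) - H S.
suff : D S0 <= 0 by rewrite subr_le0.
have [S1 _ maxD] : exists2 S1 : St, true & forall S, D S <= D S1.
  by case: (@arg_maxP _ _ _ S0 xpredT D isT) => S1 _ Hm; exists S1 => // S; exact: Hm.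
have [S2 /eqP DS2 maxc] : exists2 S2, D S2 == D S1 &
    forall S, D S == D S1 -> (cnt S <= cnt S2)%N.
  by case: (@arg_maxnP _ S1 (fun S => D S == D S1) cnt (eqxx _)) => S2 P2 Hm; exists S2.
apply: le_trans (maxD S0) _; rewrite -DS2.
have [c0|cpos] := posnP (cnt S2).
  by rewrite /D c0 phi0 sub0r oppr_le0 H_ge0.
have [cn|cltn] := eqVneq (cnt S2) n.
  rewrite /D cn phin // subr_le0; apply: le_trans (H_ub 0 S2).
  by rewrite h0 cnt_mono.
exfalso.
have clt : (cnt S2 < n)%N.
  by rewrite ltn_neqAle cltn /= /cnt; apply: leq_trans (max_card _) _; rewrite card_ord.
have n1 : (1 < n)%N by apply: leq_ltn_trans clt.
move: (cpos); rewrite /cnt card_gt0 => /set0Pn [v]; rewrite inE => Sv.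
have [w Sw] : exists w, S2 w != a.
  case: (pickP (fun w => S2 w != a)) => [w Sw|all]; first by exists w.
  have : monochrome a S2.
    by apply/eqP/ffunP => u; rewrite ffunE; move: (all u) => /negbFE/eqP.
  by move/mono_cnt; move/eqP: cltn.
have vw : v != w by apply/eqP => evw; move: Sw; rewrite -evw Sv.
have nm : ~~ monochrome a S2 by apply/negP => /mono_cnt; apply/eqP.
have ED : D S2 <= E S2 D.
  rewrite /D E_sub lerB //; last exact: PH_le.
  by rewrite E_cnt e_1 // mul1r lerDl; apply: mulr_ge0;
    [apply: divr_ge0; [rewrite invr_ge0 ler0n | exact/ltW/W_gt0] | exact: drift_ge].
have E0 : E S2 (fun X => D S2 - D X) <= 0.
  by rewrite E_sub E_const e_1 // mul1r subr_le0.
have hle0 : F (S2 v) / W S2 * dn * (D S2 - D (upd S2 v w)) <= 0.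
  apply: le_trans E0.
  apply: (term_le_sum (fun v w => F (S2 v) / W S2 * dn * (D S2 - D (upd S2 v w))) v w _ vw).
  move=> v' w' /=; apply: mulr_ge0; first exact: coef_ge0.
  by rewrite subr_ge0 DS2 maxD.
move: hle0.
have cpos' : 0 < F (S2 v) / W S2 * dn.
  apply: mulr_gt0; first exact: divr_gt0 (Fpos _) (W_gt0 _).
  by rewrite invr_gt0 ltr0n; case: n n1 => [|[]].
rewrite pmulr_rle0 // subr_le0 => hle.
have eqD : D (upd S2 v w) == D S1.
  by rewrite eq_le maxD /= -DS2.
have := maxc _ eqD; have := cnt_upd S2 v w.
rewrite Sv (negPf Sw) /=; lia.
Qed.

End Moran.

Lemma conv (R : realType) (n : nat) (r : R) k : r != 1 ->
  (1 - r ^+ k) / (1 - r ^+ n) = @phi R n r k.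
Proof.
move=> r1; rewrite /phi /sr.
have hh m : 1 - r ^+ m = (1 - r) * \sum_(i < m) r ^+ i.
  by rewrite -opprB subrX1 -mulNr opprB.
by rewrite !hh invfM mulrACA divff ?mul1r // subr_eq0 eq_sym.
Qed.

Theorem lemma22 (R : realType) (n : nat) (T : finType) (f : T -> rat)
    (a bp bm : T) (M0 : {ffun 'I_n -> T}) :
  (0 < n)%N ->
  (forall x : T, 1 <= f x) ->
  bp != a -> (forall b : T, b != a -> f b <= f bp) ->
  bm != a -> (forall b : T, b != a -> f bm <= f b) ->
  f a != f bp -> f a != f bm ->
  let i := #|[set v | M0 v == a]| in
  let rp : R := ratr (f bp / f a) in
  let rm : R := ratr (f bm / f a) in
  (1 - rp ^+ i) / (1 - rp ^+ n)
    <= fixation_prob (complete_graph n) (fun x => (ratr (f x) : R)) a M0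
    <= (1 - rm ^+ i) / (1 - rm ^+ n).
Proof.
move=> n0 f1 bpa Hbp bma Hbm nap nam; cbv zeta.
set rp : R := ratr (f bp / f a); set rm : R := ratr (f bm / f a).
pose F := fun x => (ratr (f x) : R).
have F1 : forall x, 1 <= F x by move=> x; rewrite /F -(rmorph1 ratr) ler_rat.
have Fpos : forall x, 0 < F x by move=> x; apply: lt_le_trans (F1 x).
have Fa0 : F a != 0 by rewrite gt_eqF.
have Fne : forall b, f a != f b -> (F b / F a) != 1.
  move=> b nb; apply/negP => /eqP e1; move: nb; rewrite -[f b]/(f b).
  have : F b = F a by rewrite -[F b](divfK Fa0) e1 mul1r.
  by move/fmorph_inj => ->; rewrite eqxx.
have erp : rp = F bp / F a by rewrite /rp fmorph_div.
have erm : rm = F bm / F a by rewrite /rm fmorph_div.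
have Fge : forall b, 0 <= F b / F a by move=> b; apply: divr_ge0; exact/ltW.
apply/andP; split.
  rewrite erp conv; last exact: Fne.
  apply: (@lower R n T a F Fpos n0 _ (Fge bp)) => b nb.
  by rewrite mulrC divfK // /F ler_rat; apply: Hbp.
rewrite erm conv; last exact: Fne.
apply: (@upper R n T a F Fpos n0 _ (Fge bm)) => b nb.
by rewrite mulrC divfK // /F ler_rat; apply: Hbm.
Qed.
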